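(* Let the timeline be $(\mathbb{Z},\leq)$, let $\Pi$ be a propositional DatalogMTL program, let $Q$ be a proposition and $t_B\le t_E$ integers, and let $B,E,Q'$ be propositions not occurring in $\Pi$ (nor in the datasets considered). Let $\Pi^Q=\Pi\cup\{Q'\leftarrow Q\,\mathcal{U}_{[0,\infty)}\,E,\ \bot\leftarrow B\wedge Q'\}$. Then for every dataset $\mathcal{D}^\dagger$ that is $\Pi$-consistent, the following are equivalent: (1) $(\mathcal{D}^\dagger,\Pi)\models Q@[t_B,t_E]$; (2) $\mathcal{D}^\dagger\cup\{B@\{t_B-1\},E@\{t_E+1\}\}$ is $\Pi^Q$-inconsistent.
   Context: A propositional DatalogMTL program uses only nullary predicates (propositions). $\mathfrak{M},t\models A\,\mathcal{U}_\varrho A'$ iff there is $t'$ with $t'-t\in\varrho$, $\mathfrak{M},t'\models A'$, and $\mathfrak{M},s\models A$ for all $s\in(t,t')$. A dataset is a finite set of facts $P@\iota$; it is $\Pi$-consistent if it has a model that is also a model of $\Pi$; $(\mathcal{D},\Pi)\models Q@\iota$ means every such model makes $Q$ true at every $t\in\iota$. *)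

(* Defs.v *)
From Stdlib Require Import ZArith List.
Import ListNotations.
Open Scope Z_scope.

Definition prop := nat.

(* Metric intervals rho subset of [0, +oo) with natural endpoints;
   [hi = None] means +oo.  Over the integer timeline, open/half-open
   endpoints reduce to closed ones, so we use closed intervals. *)
Record range := mkRange { r_lo : nat ; r_hi : option nat }.

Definition in_range (r : range) (d : Z) : Prop :=
  Z.of_nat (r_lo r) <= d /\
  match r_hi r with None => True | Some h => d <= Z.of_nat h end.

(* Intervals of the timeline Z (for facts); None = -oo / +oo. *)
Record tinterval := mkTI { ti_lo : option Z ; ti_hi : option Z }.

Definition in_tinterval (i : tinterval) (t : Z) : Prop :=
  match ti_lo i with None => True | Some l => l <= t end /\
  match ti_hi i with None => True | Some h => t <= h end.

Definition punctual (t : Z) : tinterval := mkTI (Some t) (Some t).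
Definition closed_int (a b : Z) : tinterval := mkTI (Some a) (Some b).

Inductive batom : Type :=
| BTop : batom
| BProp : prop -> batom
| BBoxMinus : range -> batom -> batom
| BBoxPlus : range -> batom -> batom
| BDiaMinus : range -> batom -> batom
| BDiaPlus : range -> batom -> batom
| BSince : range -> batom -> batom -> batom
| BUntil : range -> batom -> batom -> batom.

Inductive hatom : Type :=
| HProp : prop -> hatom
| HBoxMinus : range -> hatom -> hatom
| HBoxPlus : range -> hatom -> hatom.

Inductive head : Type :=
| HBot : head
| HAtom : hatom -> head.

Record rule := mkRule { r_head : head ; r_body : list batom }.
Definition program := list rule.

Record fact := mkFact { f_prop : prop ; f_int : tinterval }.
Definition dataset := list fact.

Definition interp := prop -> Z -> Prop.

Fixpoint sat_b (M : interp) (t : Z) (a : batom) : Prop :=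
  match a with
  | BTop => True
  | BProp p => M p t
  | BBoxMinus r A => forall s, in_range r (t - s) -> sat_b M s A
  | BBoxPlus r A => forall s, in_range r (s - t) -> sat_b M s A
  | BDiaMinus r A => exists s, in_range r (t - s) /\ sat_b M s A
  | BDiaPlus r A => exists s, in_range r (s - t) /\ sat_b M s A
  | BSince r A A' => exists t', in_range r (t - t') /\ sat_b M t' A' /\
        forall s, t' < s < t -> sat_b M s A
  | BUntil r A A' => exists t', in_range r (t' - t) /\ sat_b M t' A' /\
        forall s, t < s < t' -> sat_b M s A
  end.

Fixpoint sat_h (M : interp) (t : Z) (a : hatom) : Prop :=
  match a with
  | HProp p => M p t
  | HBoxMinus r A => forall s, in_range r (t - s) -> sat_h M s A
  | HBoxPlus r A => forall s, in_range r (s - t) -> sat_h M s A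
  end.

Definition sat_head (M : interp) (t : Z) (h : head) : Prop :=
  match h with
  | HBot => False
  | HAtom a => sat_h M t a
  end.

Definition model_rule (M : interp) (r : rule) : Prop :=
  forall t, (forall a, In a (r_body r) -> sat_b M t a) -> sat_head M t (r_head r).

Definition model_program (M : interp) (P : program) : Prop :=
  forall r, In r P -> model_rule M r.

Definition model_dataset (M : interp) (D : dataset) : Prop :=
  forall f, In f D -> forall t, in_tinterval (f_int f) t -> M (f_prop f) t.

Definition consistent (D : dataset) (P : program) : Prop :=
  exists M, model_dataset M D /\ model_program M P.

Definition entails (D : dataset) (P : program) (Q : prop) (i : tinterval) : Prop :=
  forall M, model_dataset M D -> model_program M P ->
    forall t, in_tinterval i t -> M Q t.

Fixpoint props_b (a : batom) : list prop :=
  match a with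
  | BTop => []
  | BProp p => [p]
  | BBoxMinus _ A | BBoxPlus _ A | BDiaMinus _ A | BDiaPlus _ A => props_b A
  | BSince _ A A' | BUntil _ A A' => props_b A ++ props_b A'
  end.

Fixpoint props_h (a : hatom) : list prop :=
  match a with
  | HProp p => [p]
  | HBoxMinus _ A | HBoxPlus _ A => props_h A
  end.

Definition props_head (h : head) : list prop :=
  match h with HBot => [] | HAtom a => props_h a end.

Definition props_rule (r : rule) : list prop :=
  props_head (r_head r) ++ flat_map props_b (r_body r).

Definition props_program (P : program) : list prop := flat_map props_rule P.

Definition props_dataset (D : dataset) : list prop := map f_prop D.

Definition range_0_inf : range := mkRange 0 None.

Definition PiQ (P : program) (Q B E Q' : prop) : program :=
  P ++ [ mkRule (HAtom (HProp Q')) [BUntil range_0_inf (BProp Q) (BProp E)] ;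
         mkRule HBot [BProp B ; BProp Q'] ].

(* Main.v *)
Require Import Defs.
From Stdlib Require Import ZArith List Lia Classical.
Import ListNotations.
Open Scope Z_scope.

Lemma sat_b_ext M1 M2 a : (forall p, In p (props_b a) -> forall t, M1 p t <-> M2 p t) ->
  forall t, sat_b M1 t a <-> sat_b M2 t a.
Proof.
  induction a; simpl; intros H t.
  - tauto.
  - apply H; left; auto.
  - split; intros H1 s Hs; apply (IHa H s); auto.
  - split; intros H1 s Hs; apply (IHa H s); auto.
  - split; intros [s [Hs H1]]; exists s; split; auto; apply (IHa H s); auto.
  - split; intros [s [Hs H1]]; exists s; split; auto; apply (IHa H s); auto.
  - assert (H1: forall p, In p (props_b a1) -> forall t, M1 p t <-> M2 p t)
      by (intros; apply H; apply in_or_app; auto).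
    assert (H2: forall p, In p (props_b a2) -> forall t, M1 p t <-> M2 p t)
      by (intros; apply H; apply in_or_app; auto).
    split; intros [t' [Hr [Ha Hs]]]; exists t'; (split; [exact Hr | split;
      [apply (IHa2 H2 t'); auto | intros s Hs'; apply (IHa1 H1 s); auto]]).
  - assert (H1: forall p, In p (props_b a1) -> forall t, M1 p t <-> M2 p t)
      by (intros; apply H; apply in_or_app; auto).
    assert (H2: forall p, In p (props_b a2) -> forall t, M1 p t <-> M2 p t)
      by (intros; apply H; apply in_or_app; auto).
    split; intros [t' [Hr [Ha Hs]]]; exists t'; (split; [exact Hr | split;
      [apply (IHa2 H2 t'); auto | intros s Hs'; apply (IHa1 H1 s); auto]]).
Qed.

Lemma sat_h_ext M1 M2 a : (forall p, In p (props_h a) -> forall t, M1 p t <-> M2 p t) ->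
  forall t, sat_h M1 t a <-> sat_h M2 t a.
Proof.
  induction a; simpl; intros H t.
  - apply H; left; auto.
  - split; intros H1 s Hs; apply (IHa H s); auto.
  - split; intros H1 s Hs; apply (IHa H s); auto.
Qed.

Lemma rule_ext M1 M2 r : (forall p, In p (props_rule r) -> forall t, M1 p t <-> M2 p t) ->
  model_rule M1 r -> model_rule M2 r.
Proof.
  intros H Hr t Hb. unfold props_rule in H.
  assert (Hbody : forall a, In a (r_body r) -> sat_b M1 t a).
  { intros a Ha. apply (sat_b_ext M1 M2 a); auto.
    intros p Hp. apply H. apply in_or_app; right. apply in_flat_map. eauto. }
  specialize (Hr t Hbody). destruct (r_head r) as [|h]; simpl in *; auto.
  apply (sat_h_ext M1 M2 h); auto. intros p Hp; apply H; apply in_or_app; left; auto.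
Qed.

Definition Mprime (M : interp) (Q B E Q' : prop) (tB tE : Z) : interp :=
  fun p t => if Nat.eqb p B then t = tB - 1 else if Nat.eqb p E then t = tE + 1
    else if Nat.eqb p Q' then (exists t', 0 <= t' - t /\ t' = tE + 1 /\
                                forall s, t < s < t' -> M Q s)
    else M p t.

Theorem mainTheorem4 (P : program) (Q B E Q' : prop) (tB tE : Z) :
  tB <= tE ->
  ~ In B (props_program P) -> ~ In E (props_program P) -> ~ In Q' (props_program P) ->
  B <> E -> B <> Q' -> E <> Q' -> Q <> B -> Q <> E -> Q <> Q' ->
  forall D : dataset,
    ~ In B (props_dataset D) -> ~ In E (props_dataset D) -> ~ In Q' (props_dataset D) ->
    consistent D P ->
    (entails D P Q (closed_int tB tE) <->
     ~ consistent (D ++ [mkFact B (punctual (tB - 1)); mkFact E (punctual (tE + 1))])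
                  (PiQ P Q B E Q')).
Proof.
  intros Hle HPB HPE HPQ' nBE nBQ' nEQ' nQB nQE nQQ' D HDB HDE HDQ' _.
  split.
  - intros Hent [M [HD HP]].
    assert (HD1 : model_dataset M D) by (intros f Hf; apply HD; apply in_or_app; auto).
    assert (HP1 : model_program M P) by (intros r Hr; apply HP; apply in_or_app; auto).
    assert (HQ : forall t, tB <= t <= tE -> M Q t)
      by (intros t Ht; apply (Hent M HD1 HP1); unfold in_tinterval; simpl; lia).
    assert (HB : M B (tB - 1)).
    { apply (HD (mkFact B (punctual (tB - 1)))); [apply in_or_app; right; left; auto | unfold in_tinterval; simpl; lia]. }
    assert (HE : M E (tE + 1)).
    { apply (HD (mkFact E (punctual (tE + 1)))); [apply in_or_app; right; right; left; auto | unfold in_tinterval; simpl; lia]. }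
    assert (HQ' : M Q' (tB - 1)).
    { apply (HP (mkRule (HAtom (HProp Q')) [BUntil range_0_inf (BProp Q) (BProp E)]) ltac:(apply in_or_app; right; left; reflexivity) (tB - 1)).
      intros a [<- | []]. simpl. exists (tE + 1). unfold in_range; simpl.
      split; [split; [lia | exact I] | split; [exact HE | intros s Hs; apply HQ; lia]]. }
    apply (HP (mkRule HBot [BProp B ; BProp Q']) ltac:(apply in_or_app; right; right; left; reflexivity) (tB - 1)).
    intros a [<- | [<- | []]]; simpl; auto.
  - intros Hinc M HD HP t Ht.
    destruct (classic (M Q t)) as [Hq | Hq]; auto. exfalso. apply Hinc.
    set (M' := Mprime M Q B E Q' tB tE).
    assert (MB : forall t, M' B t <-> t = tB - 1).
    { intros; unfold M', Mprime; rewrite Nat.eqb_refl; tauto. }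
    assert (ME : forall t, M' E t <-> t = tE + 1).
    { intros; unfold M', Mprime. rewrite (proj2 (Nat.eqb_neq E B)) by auto.
      rewrite Nat.eqb_refl; tauto. }
    assert (MQ' : forall t, M' Q' t <-> (exists t', 0 <= t' - t /\ t' = tE + 1 /\
                                forall s, t < s < t' -> M Q s)).
    { intros; unfold M', Mprime. rewrite (proj2 (Nat.eqb_neq Q' B)) by auto.
      rewrite (proj2 (Nat.eqb_neq Q' E)) by auto. rewrite Nat.eqb_refl; tauto. }
    assert (Mo : forall p, p <> B -> p <> E -> p <> Q' -> forall t, M' p t <-> M p t).
    { intros p h1 h2 h3 t0; unfold M', Mprime.
      rewrite (proj2 (Nat.eqb_neq p B)) by auto.
      rewrite (proj2 (Nat.eqb_neq p E)) by auto.
      rewrite (proj2 (Nat.eqb_neq p Q')) by auto. tauto. }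
    exists M'. split.
    + intros f Hf t0 Ht0. apply in_app_or in Hf. destruct Hf as [Hf | [<- | [<- | []]]].
      * assert (Hin : In (f_prop f) (props_dataset D)) by (apply in_map; auto).
        apply Mo; try (intro Heq; rewrite Heq in Hin; contradiction).
        apply (HD f Hf t0 Ht0).
      * apply MB. unfold in_tinterval in Ht0; simpl in Ht0; lia.
      * apply ME. unfold in_tinterval in Ht0; simpl in Ht0; lia.
    + intros r Hr. apply in_app_or in Hr. destruct Hr as [Hr | [<- | [<- | []]]].
      * apply (rule_ext M M'); [| apply HP; auto].
        intros p Hp t0.
        assert (Hin : In p (props_program P)) by (apply in_flat_map; eauto).
        symmetry; apply Mo; intro Heq; rewrite Heq in Hin; contradiction.
      * intros t0 Hb. specialize (Hb _ (or_introl eq_refl)). simpl in Hb |- *.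
        destruct Hb as [t' [Hr [He Hs]]]. apply MQ'. apply ME in He.
        exists t'. unfold in_range in Hr; simpl in Hr. split; [lia | split; [lia |]].
        intros s Hs'. apply (proj1 (Mo Q nQB nQE nQQ' s)). apply Hs; auto.
      * intros t0 Hb. simpl.
        pose proof (Hb _ (or_introl eq_refl)) as H1.
        pose proof (Hb _ (or_intror (or_introl eq_refl))) as H2.
        simpl in H1, H2. apply MB in H1. apply MQ' in H2.
        destruct H2 as [t' [_ [-> Hs]]]. apply Hq, Hs. unfold in_tinterval in Ht; simpl in Ht. lia.
Qed.
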